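(* Let $H$ be a weak Hopf algebra and $A$ a symmetric partial $H$-module algebra. Then $\pi_0\colon H\to A\,\underline{\#}\,H$, $\pi_0(h)=1_A\,\underline{\#}\,h$, is a partial representation of $H$ in the partial smash product $A\,\underline{\#}\,H$.
   Context: All algebras are associative and unital over a field $\Bbbk$; Sweedler notation $\Delta(h)=h_1\otimes h_2$, $\Delta(1_H)=1_1\otimes1_2$. A weak Hopf algebra is $(H,m,u,\Delta,\varepsilon,S)$ with $H$ an algebra, $(H,\Delta,\varepsilon)$ a coalgebra, and for all $g,h,k$: $\Delta(kh)=\Delta(k)\Delta(h)$; $\varepsilon(kh_1)\varepsilon(h_2g)=\varepsilon(khg)=\varepsilon(kh_2)\varepsilon(h_1g)$; $(1\otimes\Delta(1))(\Delta(1)\otimes1)=\Delta^2(1)=(\Delta(1)\otimes1)(1\otimes\Delta(1))$; $h_1S(h_2)=\varepsilon_t(h)$; $S(h_1)h_2=\varepsilon_s(h)$; $S(h)=S(h_1)h_2S(h_3)$, with $\varepsilon_t(h)=\varepsilon(1_1h)1_2$, $\varepsilon_s(h)=1_1\varepsilon(h1_2)$; $H_t=\varepsilon_t(H)$, $H_s=\varepsilon_s(H)$; the restriction $S_R\colon H_s\to H_t$ of $S$ is bijective. Symmetric partial $H$-module algebra: algebra $A$ with linear $h\otimes a\mapsto h\cdot a$ such that $h\cdot(ab)=(h_1\cdot a)(h_2\cdot b)$, $1_H\cdot a=a$, $h\cdot(k\cdot a)=(h_1\cdot1_A)((h_2k)\cdot a)$ and $h\cdot(k\cdot a)=((h_1k)\cdot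 a)(h_2\cdot1_A)$. Smash product $A\#H=A\otimes_{H_t}H$ ($A$ a right $H_t$-module via $a\triangleleft z=a(S_R^{-1}(z)\cdot1_A)$, $H$ a left $H_t$-module by multiplication) with product $(a\#h)(b\#g)=a(h_1\cdot b)\#h_2g$; $A\,\underline{\#}\,H$ is the subalgebra generated by $a\,\underline{\#}\,h:=(a\#h)(1_A\#1_H)=a(h_1\cdot1_A)\#h_2$, unital with unit $1_A\,\underline{\#}\,1_H$. A partial representation of $H$ in an algebra $B$ is a linear $\pi\colon H\to B$ with, for all $h,k$: (PR1) $\pi(1_H)=1_B$; (PR2) $\pi(h)\pi(k_1)\pi(S(k_2))=\pi(hk_1)\pi(S(k_2))$; (PR3) $\pi(h)\pi(S(k_1))\pi(k_2)=\pi(hS(k_1))\pi(k_2)$; (PR4) $\pi(h_1)\pi(S(h_2))\pi(k)=\pi(h_1)\pi(S(h_2)k)$; (PR5) $\pi(S(h_1))\pi(h_2)\pi(k)=\pi(S(h_1))\pi(h_2k)$; (PR6) $\pi(h)=\pi(h_1)\pi(S(h_2))\pi(h_3)$. *)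

(* Defs.v *)
(* Weak Hopf algebras, symmetric partial module algebras,
   the partial smash product and partial representations, encoded without a
   tensor-product library: elements of tensor products are represented by
   finite formal sums of pure tensors (sequences of pairs/triples), and
   equality of such elements is tested against all multilinear (resp.
   balanced bilinear) forms with values in the ground field, which separate
   points of (balanced) tensor products of vector spaces over a field. *)
From HB Require Import structures.
From mathcomp Require Import all_boot all_order all_algebra.
Set Implicit Arguments.
Unset Strict Implicit.
Unset Printing Implicit Defensive.
Import GRing.Theory.
Local Open Scope ring_scope.

Section Defs.
Variable K : fieldType.

Definition klinear (V W : lmodType K) (f : V -> W) :=
  forall (a : K) (x y : V), f (a *: x + y) = a *: f x + f y.

Definition kform (V : lmodType K) (f : V -> K) :=
  forall (a : K) (x y : V), f (a *: x + y) = a * f x + f y.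

Definition bilinear_form (V W : lmodType K) (f : V -> W -> K) :=
  (forall w, kform (fun v => f v w)) /\ (forall v, kform (f v)).

Definition trilinear_form (U V W : lmodType K) (f : U -> V -> W -> K) :=
  [/\ forall v w, kform (fun u => f u v w),
      forall u w, kform (fun v => f u v w) &
      forall u v, kform (f u v)].

(* equality of two elements of V (x) W given as formal sums of pure tensors *)
Definition teq2 (V W : lmodType K) (s t : seq (V * W)) :=
  forall f : V -> W -> K, bilinear_form f ->
    \sum_(p <- s) f p.1 p.2 = \sum_(p <- t) f p.1 p.2.

Definition teq3 (U V W : lmodType K) (s t : seq (U * V * W)) :=
  forall f : U -> V -> W -> K, trilinear_form f ->
    \sum_(p <- s) f p.1.1 p.1.2 p.2 = \sum_(p <- t) f p.1.1 p.1.2 p.2.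

Section WeakHopf.
Variable H : algType K.
Variables (eps : H -> K) (Delta : H -> seq (H * H)) (S : H -> H).

Definition eps_t (h : H) : H := \sum_(p <- Delta 1) eps (p.1 * h) *: p.2.
Definition eps_s (h : H) : H := \sum_(p <- Delta 1) eps (h * p.2) *: p.1.

Definition in_Ht (z : H) := exists h, z = eps_t h.
Definition in_Hs (z : H) := exists h, z = eps_s h.

Definition Delta2l (h : H) : seq (H * H * H) :=
  [seq (q.1, q.2, p.2) | p <- Delta h, q <- Delta p.1].
Definition Delta2r (h : H) : seq (H * H * H) :=
  [seq (p.1, q.1, q.2) | p <- Delta h, q <- Delta p.2].

Definition is_weak_hopf : Prop :=
  kform eps
  /\ (forall (a : K) x y, teq2 (Delta (a *: x + y))
          ([seq (a *: p.1, p.2) | p <- Delta x] ++ Delta y))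
  /\ (forall h, teq3 (Delta2l h) (Delta2r h))
  /\ (forall h, \sum_(p <- Delta h) eps p.1 *: p.2 = h
               /\ \sum_(p <- Delta h) eps p.2 *: p.1 = h)
  /\ (forall k h, teq2 (Delta (k * h))
          [seq (p.1 * q.1, p.2 * q.2) | p <- Delta k, q <- Delta h])
  /\ (forall k h g,
          \sum_(p <- Delta h) eps (k * p.1) * eps (p.2 * g) = eps (k * h * g)
       /\ eps (k * h * g) = \sum_(p <- Delta h) eps (k * p.2) * eps (p.1 * g))
  (* weak comultiplicativity of the unit:
     (1 (x) Delta 1)(Delta 1 (x) 1) = Delta^2 1 = (Delta 1 (x) 1)(1 (x) Delta 1) *)
  /\ (teq3 [seq (p.1, q.1 * p.2, q.2) | q <- Delta 1, p <- Delta 1]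
            (Delta2l 1)
       /\ teq3 (Delta2l 1)
            [seq (p.1, p.2 * q.1, q.2) | p <- Delta 1, q <- Delta 1])
  /\ klinear S
  /\ (forall h, \sum_(p <- Delta h) p.1 * S p.2 = eps_t h)
  /\ (forall h, \sum_(p <- Delta h) S p.1 * p.2 = eps_s h)
  /\ (forall h, S h = \sum_(p <- Delta2l h) S p.1.1 * p.1.2 * S p.2)
  (* the restriction S_R : H_s -> H_t of S is a bijection *)
  /\ (forall y, in_Hs y -> in_Ht (S y))
  /\ (forall y y', in_Hs y -> in_Hs y' -> S y = S y' -> y = y')
  /\ (forall z, in_Ht z -> exists2 y, in_Hs y & S y = z).

Variable A : algType K.
Variable act : H -> A -> A.

Definition is_sym_partial_module_algebra : Prop :=
  (forall a, klinear (fun h => act h a))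
  /\ (forall h, klinear (act h))
  /\ (forall h (a b : A), act h (a * b) = \sum_(p <- Delta h) act p.1 a * act p.2 b)
  /\ (forall a, act 1 a = a)
  /\ (forall h k a, act h (act k a) =
          \sum_(p <- Delta h) act p.1 1 * act (p.2 * k) a)
  /\ (forall h k a, act h (act k a) =
          \sum_(p <- Delta h) act (p.1 * k) a * act p.2 1).

Definition smash := seq (A * H).

(* balanced forms: f (a <| z) h = f a (z h) for z in H_t, where
   a <| z = a (S_R^{-1}(z) . 1_A); we write z = S y with y in H_s. *)
Definition balanced (f : A -> H -> K) :=
  forall (y : H) a h, in_Hs y -> f (a * act y 1) h = f a (S y * h).

(* equality in A (x)_{H_t} H *)
Definition smash_eq (x y : smash) :=
  forall f : A -> H -> K, bilinear_form f -> balanced f ->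
    \sum_(p <- x) f p.1 p.2 = \sum_(p <- y) f p.1 p.2.

(* (a # h)(b # g) = a (h_1 . b) # h_2 g, extended bilinearly *)
Definition smash_mul (x y : smash) : smash :=
  flatten [seq [seq (p.1 * act q.1 r.1, q.2 * r.2) | r <- y, q <- Delta p.2] | p <- x].

Definition usmash (a : A) (h : H) : smash := smash_mul [:: (a, h)] [:: (1, 1)].

Definition pi0 (h : H) : smash := usmash 1 h.

(* the unit of the subalgebra A #_ H is 1_A #_ 1_H *)
Definition is_partial_rep_smash (pi : H -> smash) : Prop :=
  smash_eq (pi 1) (usmash 1 1)
  /\ (forall h k, smash_eq
         (flatten [seq smash_mul (smash_mul (pi h) (pi p.1)) (pi (S p.2)) | p <- Delta k])
         (flatten [seq smash_mul (pi (h * p.1)) (pi (S p.2)) | p <- Delta k]))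
  /\ (forall h k, smash_eq
         (flatten [seq smash_mul (smash_mul (pi h) (pi (S p.1))) (pi p.2) | p <- Delta k])
         (flatten [seq smash_mul (pi (h * S p.1)) (pi p.2) | p <- Delta k]))
  /\ (forall h k, smash_eq
         (flatten [seq smash_mul (smash_mul (pi p.1) (pi (S p.2))) (pi k) | p <- Delta h])
         (flatten [seq smash_mul (pi p.1) (pi (S p.2 * k)) | p <- Delta h]))
  /\ (forall h k, smash_eq
         (flatten [seq smash_mul (smash_mul (pi (S p.1)) (pi p.2)) (pi k) | p <- Delta h])
         (flatten [seq smash_mul (pi (S p.1)) (pi (p.2 * k)) | p <- Delta h]))
  /\ (forall h, smash_eq (pi h)
         (flatten [seq smash_mul (smash_mul (pi p.1.1) (pi (S p.1.2))) (pi p.2)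
                  | p <- Delta2l h])).

End WeakHopf.
End Defs.

(* Main.v *)
Require Import Defs.
From HB Require Import structures.
From mathcomp Require Import all_boot all_order all_algebra.
Set Implicit Arguments.
Unset Strict Implicit.
Unset Printing Implicit Defensive.
Import GRing.Theory.
Local Open Scope ring_scope.

Section Gen.
Variable K : fieldType.
Lemma mulDl' (R : algType K) a (x y z : R) : (a *: x + y) * z = a *: (x*z) + y*z.
Proof. by rewrite mulrDl scalerAl. Qed.
Lemma mulDr' (R : algType K) a (x y z : R) : z * (a *: x + y) = a *: (z*x) + z*y.
Proof. by rewrite mulrDr scalerAr. Qed.
Lemma scaleD' (R : lmodType K) a c (x y : R) : c *: (a *: x + y) = a *: (c *: x) + c *: y.
Proof. by rewrite scalerDr !scalerA mulrC. Qed.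
Lemma KmulDr (c a X Y : K) : c * (a * X + Y) = a * (c * X) + c * Y.
Proof. by rewrite mulrDr mulrCA. Qed.
Lemma KmulDl (c a X Y : K) : (a * X + Y) * c = a * (X * c) + Y * c.
Proof. by rewrite mulrDl mulrA. Qed.

Lemma kform0 (V : lmodType K) (g : V -> K) : kform g -> g 0 = 0.
Proof. move=> hg; have := hg 1 0 0; rewrite scale1r addr0 mul1r => h.
have : g 0 + g 0 = g 0 + 0 by rewrite -h addr0.
by move/addrI. Qed.
Lemma kformZ (V : lmodType K) (g : V -> K) a x : kform g -> g (a *: x) = a * g x.
Proof. by move=> hg; have := hg a x 0; rewrite addr0 kform0 // addr0. Qed.
Lemma kformD (V : lmodType K) (g : V -> K) x y : kform g -> g (x + y) = g x + g y.
Proof. by move=> hg; have := hg 1 x y; rewrite scale1r mul1r. Qed.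
Lemma kform_sum (V : lmodType K) (g : V -> K) I (s : seq I) (F : I -> V) : kform g ->
  g (\sum_(i <- s) F i) = \sum_(i <- s) g (F i).
Proof.
move=> hg; elim: s => [|i s IH]; first by rewrite !big_nil kform0.
by rewrite !big_cons kformD // IH.
Qed.
End Gen.

Section Work.
Variable K : fieldType.
Variable H : algType K.
Variables (eps : H -> K) (Delta : H -> seq (H * H)) (S : H -> H).
Variable A : algType K.
Variable act : H -> A -> A.
Hypothesis HW : is_weak_hopf eps Delta S.
Hypothesis HA : is_sym_partial_module_algebra Delta act.

Record bform := BForm { bf :> A -> H -> K; bfP : bilinear_form bf }.

Lemma bfD1 (f : bform) a x y w : f (a *: x + y) w = a * f x w + f y w.
Proof. by case: f => f [H1 H2]; apply: H1. Qed.
Lemma bfD2 (f : bform) a x y w : f w (a *: x + y) = a * f w x + f w y.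
Proof. by case: f => f [H1 H2]; apply: H2. Qed.

Record lform := LForm { lf :> H -> K; lfP : kform lf }.
Lemma lfD (L : lform) a x y : L (a *: x + y) = a * L x + L y.
Proof. by case: L => L hL; apply: hL. Qed.
Record aform := AForm { af :> A -> K; afP : kform af }.
Lemma afD (g : aform) a x y : g (a *: x + y) = a * g x + g y.
Proof. by case: g => g hg; apply: hg. Qed.
Definition weqA (x y : A) := forall g : aform, g x = g y.
Definition weqH (x y : H) := forall L : lform, L x = L y.

Lemma epsD a x y : eps (a *: x + y) = a * eps x + eps y.
Proof. by case: HW => H1 _; apply: H1. Qed.
Lemma SD a x y : S (a *: x + y) = a *: S x + S y.
Proof. by case: HW => _ [_ [_ [_ [_ [_ [_ [H1 _]]]]]]]; apply: H1. Qed.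
Lemma actD1 a x y b : act (a *: x + y) b = a *: act x b + act y b.
Proof. by case: HA => H1 _; apply: (H1 b). Qed.
Lemma actD2 h a x y : act h (a *: x + y) = a *: act h x + act h y.
Proof. by case: HA => _ [H1 _]; apply: H1. Qed.

Definition epst := eps_t eps Delta.
Definition epss := eps_s eps Delta.
Lemma epstD a x y : epst (a *: x + y) = a *: epst x + epst y.
Proof.
rewrite /epst /eps_t scaler_sumr -big_split /=; apply: eq_bigr => p _.
by rewrite mulDr' epsD scalerDl scalerA.
Qed.
Lemma epssD a x y : epss (a *: x + y) = a *: epss x + epss y.
Proof.
rewrite /epss /eps_s scaler_sumr -big_split /=; apply: eq_bigr => p _.
by rewrite mulDl' epsD scalerDl scalerA.
Qed.

Ltac extra := fail.
Ltac push := repeat progress (rewrite ?actD1 ?actD2 ?SD ?epsD ?mulDl' ?mulDr' ?scaleD' ?bfD1 ?bfD2 ?lfD ?afD ?epssD ?epstD ?KmulDr ?KmulDl; try extra).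

Lemma ax_Dlin a x y : teq2 (Delta (a *: x + y)) ([seq (a *: p.1, p.2) | p <- Delta x] ++ Delta y).
Proof. by case: HW => _ [H1 _]. Qed.
Lemma ax_coas h : teq3 (Delta2l Delta h) (Delta2r Delta h).
Proof. by case: HW => _ [_ [H1 _]]. Qed.
Lemma ax_counit h : \sum_(p <- Delta h) eps p.1 *: p.2 = h /\ \sum_(p <- Delta h) eps p.2 *: p.1 = h.
Proof. by case: HW => _ [_ [_ [H1 _]]]. Qed.
Lemma ax_mul k h : teq2 (Delta (k * h)) [seq (p.1 * q.1, p.2 * q.2) | p <- Delta k, q <- Delta h].
Proof. by case: HW => _ [_ [_ [_ [H1 _]]]]. Qed.
Lemma ax_epsmul k h g : \sum_(p <- Delta h) eps (k * p.1) * eps (p.2 * g) = eps (k * h * g)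
       /\ eps (k * h * g) = \sum_(p <- Delta h) eps (k * p.2) * eps (p.1 * g).
Proof. by case: HW => _ [_ [_ [_ [_ [H1 _]]]]]. Qed.
Lemma ax_unit1 : teq3 [seq (p.1, q.1 * p.2, q.2) | q <- Delta 1, p <- Delta 1] (Delta2l Delta 1).
Proof. by case: HW => _ [_ [_ [_ [_ [_ [[H1 _] _]]]]]]. Qed.
Lemma ax_unit2 : teq3 (Delta2l Delta 1) [seq (p.1, p.2 * q.1, q.2) | p <- Delta 1, q <- Delta 1].
Proof. by case: HW => _ [_ [_ [_ [_ [_ [[_ H1] _]]]]]]. Qed.
Lemma ax_St h : \sum_(p <- Delta h) p.1 * S p.2 = epst h.
Proof. by case: HW => _ [_ [_ [_ [_ [_ [_ [_ [H1 _]]]]]]]]. Qed.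
Lemma ax_Ss h : \sum_(p <- Delta h) S p.1 * p.2 = epss h.
Proof. by case: HW => _ [_ [_ [_ [_ [_ [_ [_ [_ [H1 _]]]]]]]]]. Qed.
Lemma ax_S3 h : S h = \sum_(p <- Delta2l Delta h) S p.1.1 * p.1.2 * S p.2.
Proof. by case: HW => _ [_ [_ [_ [_ [_ [_ [_ [_ [_ [H1 _]]]]]]]]]]. Qed.

Lemma ax_mod_mul h (a b : A) : act h (a * b) = \sum_(p <- Delta h) act p.1 a * act p.2 b.
Proof. by case: HA => _ [_ [H1 _]]. Qed.
Lemma ax_mod_1 a : act 1 a = a.
Proof. by case: HA => _ [_ [_ [H1 _]]]. Qed.
Lemma ax_M5 h k a : act h (act k a) = \sum_(p <- Delta h) act p.1 1 * act (p.2 * k) a.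
Proof. by case: HA => _ [_ [_ [_ [H1 _]]]]. Qed.
Lemma ax_M6 h k a : act h (act k a) = \sum_(p <- Delta h) act (p.1 * k) a * act p.2 1.
Proof. by case: HA => _ [_ [_ [_ [_ H1]]]]. Qed.

Definition bil (F : H * H -> K) := bilinear_form (fun u v => F (u, v)).

Lemma Dlin (F : H * H -> K) a x y : bil F ->
  \sum_(p <- Delta (a *: x + y)) F p = a * \sum_(p <- Delta x) F p + \sum_(p <- Delta y) F p.
Proof.
move=> hF; have := @ax_Dlin a x y (fun u v => F (u, v)) hF.
have E : forall s : seq (H * H), \sum_(p <- s) F (p.1, p.2) = \sum_(p <- s) F p.
  by move=> s; apply: eq_bigr => -[].
rewrite !E => ->; rewrite big_cat big_map /= big_distrr /=; congr (_ + _).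
apply: eq_bigr => -[u v] _ /=.
by case: hF => h1 _; rewrite (kformZ _ _ (h1 v)).
Qed.

Lemma D0 (F : H * H -> K) : bil F -> \sum_(p <- Delta 0) F p = 0.
Proof.
move=> hF; have := Dlin 1 0 0 hF; rewrite scale1r addr0 mul1r => h.
have : \sum_(p <- Delta 0) F p + \sum_(p <- Delta 0) F p = \sum_(p <- Delta 0) F p + 0 by rewrite -h addr0.
by move/addrI.
Qed.

Lemma Dsum (F : H * H -> K) I (s : seq I) (c : I -> K) (v : I -> H) : bil F ->
  \sum_(q <- Delta (\sum_(i <- s) c i *: v i)) F q = \sum_(i <- s) c i * \sum_(q <- Delta (v i)) F q.
Proof.
move=> hF; elim: s => [|i s IH]; first by rewrite !big_nil D0.
by rewrite !big_cons Dlin // IH.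
Qed.

Lemma Dmul (F : H * H -> K) x y : bil F ->
  \sum_(p <- Delta (x * y)) F p = \sum_(p <- Delta x) \sum_(q <- Delta y) F (p.1 * q.1, p.2 * q.2).
Proof.
move=> hF; have := @ax_mul x y (fun u v => F (u, v)) hF.
have E : forall s : seq (H * H), \sum_(p <- s) F (p.1, p.2) = \sum_(p <- s) F p.
  by move=> s; apply: eq_bigr => -[].
by rewrite E => ->; rewrite big_allpairs_dep.
Qed.

Lemma Dcoas (F : H * H -> H * H -> K) h :
  (forall u z z' r, F (u, z) r = F (u, z') r) ->
  trilinear_form (fun a b c => F (a, 0) (b, c)) ->
  \sum_(t <- Delta h) \sum_(q <- Delta t.2) F t q =
  \sum_(t <- Delta h) \sum_(q <- Delta t.1) F (q.1, 0) (q.2, t.2).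
Proof.
move=> hz hF; have := @ax_coas h (fun a b c => F (a, 0) (b, c)) hF.
rewrite /Delta2l /Delta2r !big_allpairs_dep /= => E.
rewrite E; apply: eq_bigr => -[u v] _; apply: eq_bigr => -[q1 q2] _ /=.
by rewrite (hz u v 0).
Qed.

Lemma Dcoas' (G : H * H -> H * H -> K) h :
  (forall z z' v r, G (z, v) r = G (z', v) r) ->
  trilinear_form (fun a b c => G (0, c) (a, b)) ->
  \sum_(t <- Delta h) \sum_(q <- Delta t.1) G t q =
  \sum_(t <- Delta h) \sum_(q <- Delta t.2) G (0, q.2) (t.1, q.1).
Proof.
move=> hz hF; have := @ax_coas h (fun a b c => G (0, c) (a, b)) hF.
rewrite /Delta2l /Delta2r !big_allpairs_dep /= => E.
rewrite -E; apply: eq_bigr => -[u v] _; apply: eq_bigr => -[q1 q2] _ /=.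
by rewrite (hz u 0 v).
Qed.

Lemma Dcounit1 (g : H -> K) h : kform g -> \sum_(p <- Delta h) eps p.1 * g p.2 = g h.
Proof.
move=> hg; rewrite -{2}(ax_counit h).1 kform_sum //; apply: eq_bigr => p _.
by rewrite kformZ.
Qed.
Lemma Dcounit2 (g : H -> K) h : kform g -> \sum_(p <- Delta h) eps p.2 * g p.1 = g h.
Proof.
move=> hg; rewrite -{2}(ax_counit h).2 kform_sum //; apply: eq_bigr => p _.
by rewrite kformZ.
Qed.
Lemma DSt (g : H -> K) h : kform g -> \sum_(p <- Delta h) g (p.1 * S p.2) = g (epst h).
Proof. by move=> hg; rewrite -ax_St kform_sum. Qed.
Lemma DSs (g : H -> K) h : kform g -> \sum_(p <- Delta h) g (S p.1 * p.2) = g (epss h).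
Proof. by move=> hg; rewrite -ax_Ss kform_sum. Qed.

Ltac lin_eq := push; first [ reflexivity
   | (rewrite Dlin; [lin_eq | bilin])
   | (rewrite big_distrr -big_split /=; apply: eq_bigr => ? _; lin_eq) ]
with bilin := rewrite ?/bil ?/bilinear_form; split => ?; kf
with trilin := rewrite ?/trilinear_form; split => ? ?; kf
with kf := let a := fresh "a" in let x := fresh "x" in let y := fresh "y" in move=> a x y /=; lin_eq.


Lemma bf_sum1 (f : bform) I (s : seq I) (G : I -> A) w : f (\sum_(i <- s) G i) w = \sum_(i <- s) f (G i) w.
Proof. by case: f => f [h1 h2] /=; exact: (kform_sum _ _ (h1 w)). Qed.
Lemma bf_sum2 (f : bform) I (s : seq I) (G : I -> H) w : f w (\sum_(i <- s) G i) = \sum_(i <- s) f w (G i).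
Proof. by case: f => f [h1 h2] /=; exact: (kform_sum _ _ (h2 w)). Qed.

Definition pi := pi0 Delta act.
Definition smul := smash_mul Delta act.

Lemma SM1 (F : A * H -> K) x y : \sum_(t <- smul x y) F t =
  \sum_(p <- x) \sum_(r <- y) \sum_(q <- Delta p.2) F (p.1 * act q.1 r.1, q.2 * r.2).
Proof.
rewrite /smul /smash_mul big_flatten big_map; apply: eq_bigr => p _.
by rewrite big_allpairs_dep.
Qed.

Lemma SM2 (F : A * H -> K) x : \sum_(t <- pi x) F t = \sum_(q <- Delta x) F (act q.1 1, q.2).
Proof.
rewrite /pi /pi0 /usmash -/smul SM1 big_cons big_nil addr0 big_cons big_nil addr0 /=.
by apply: eq_bigr => q _; rewrite mul1r mulr1.
Qed.

Lemma mod_mul1 (f : bform) x b w : \sum_(q <- Delta x) f (act q.1 1 * act q.2 b) w = f (act x b) w.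
Proof. by rewrite -bf_sum1 -ax_mod_mul mul1r. Qed.

Lemma E2 (f : bform) x y : \sum_(t <- smul (pi x) (pi y)) f t.1 t.2 =
  \sum_(p <- Delta x) \sum_(r <- Delta y) f (act p.1 (act r.1 1)) (p.2 * r.2).
Proof.
rewrite SM1 SM2.
under eq_bigr => a _ do rewrite SM2 /= exchange_big /=.
rewrite (Dcoas (F := fun a q => \sum_(i <- Delta y) f (act a.1 1 * act q.1 (act i.1 1)) (q.2 * i.2))) //=; last by trilin.
apply: eq_bigr => a _; rewrite exchange_big /=; apply: eq_bigr => r _.
by rewrite mod_mul1.
Qed.


Lemma E2' (f : bform) x y : \sum_(t <- smul (pi x) (pi y)) f t.1 t.2 =
  \sum_(p <- Delta x) \sum_(r <- Delta y) f (act p.1 (act r.1 1)) (p.2 * r.2).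
Proof.
rewrite SM1 SM2.
under eq_bigr => a _ do rewrite SM2 /= exchange_big /=.
rewrite Dcoas //=; last by trilin.
apply: eq_bigr => a _; rewrite exchange_big /=; apply: eq_bigr => r _.
by rewrite mod_mul1.
Qed.


Ltac coas := rewrite Dcoas //=; [|trilin].
Ltac coas' := rewrite Dcoas' //=; [|trilin].
Ltac dmul := rewrite Dmul /=; [|bilin].

Lemma mod_mul2 (f : bform) x a b Y w :
  \sum_(q <- Delta x) f (act q.1 a * act q.2 b * Y) w = f (act x (a * b) * Y) w.
Proof. by rewrite ax_mod_mul big_distrl /= bf_sum1. Qed.

Lemma mod_mul3 (f : bform) x a b Y w :
  \sum_(q <- Delta x) f (act q.1 a * (act q.2 b * Y)) w = f (act x (a * b) * Y) w.
Proof. by rewrite -mod_mul2; apply: eq_bigr => q _; rewrite mulrA. Qed.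

Lemma assoc_core (f : bform) x g b c m :
 \sum_(p <- Delta x) \sum_(q <- Delta (p.2 * g)) f (act p.1 b * act q.1 c) (q.2 * m) =
 \sum_(p <- Delta x) \sum_(v <- Delta g) f (act p.1 (b * act v.1 c)) (p.2 * v.2 * m).
Proof.
symmetry.
under eq_bigr => p _ do under eq_bigr => v _ do
  rewrite ax_mod_mul bf_sum1.
under eq_bigr => p _ do under eq_bigr => v _ do under eq_bigr => u _ do
  rewrite ax_M5 big_distrr bf_sum1 /=.
under eq_bigr => p _ do under eq_bigr => v _ do coas.
under eq_bigr => p _ do under eq_bigr => v _ do under eq_bigr => u _ do rewrite mod_mul3 mulr1.
under eq_bigr => p _ do rewrite exchange_big /=.
coas'.
apply: eq_bigr => p _; dmul.
apply: eq_bigr => u _; apply: eq_bigr => v _.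
by [].
Qed.


Lemma act0r h : act h 0 = 0.
Proof. have := actD2 h 1 0 0; rewrite !scale1r !addr0 => E.
have : act h 0 + act h 0 = act h 0 + 0 by rewrite -E addr0.
by move/addrI. Qed.
Lemma act0l b : act 0 b = 0.
Proof. have := actD1 1 0 0 b; rewrite !scale1r !addr0 => E.
have : act 0 b + act 0 b = act 0 b + 0 by rewrite -E addr0.
by move/addrI. Qed.
Lemma act_sum2 h I (s : seq I) (G : I -> A) : act h (\sum_(i <- s) G i) = \sum_(i <- s) act h (G i).
Proof.
elim: s => [|i s IH]; first by rewrite !big_nil act0r.
by rewrite !big_cons -[act h (G i + _)](congr1 _ (congr2 _ (scale1r (G i)) (erefl _))) actD2 scale1r IH.
Qed.
Lemma act_sum1 b I (s : seq I) (G : I -> H) : act (\sum_(i <- s) G i) b = \sum_(i <- s) act (G i) b.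
Proof.
elim: s => [|i s IH]; first by rewrite !big_nil act0l.
by rewrite !big_cons -[act (G i + _) b](congr1 (act^~ b) (congr2 _ (scale1r (G i)) (erefl _))) actD1 scale1r IH.
Qed.

Lemma mod_mulin (f : bform) h x B w :
  \sum_(v <- Delta x) f (act h (act v.1 1 * act v.2 B)) w = f (act h (act x B)) w.
Proof. by rewrite -bf_sum1 -act_sum2 -ax_mod_mul mul1r. Qed.

Lemma E3 (f : bform) x y w : \sum_(t <- smul (smul (pi x) (pi y)) (pi w)) f t.1 t.2 =
  \sum_(p <- Delta x) \sum_(r <- Delta y) \sum_(s <- Delta w)
     f (act p.1 (act r.1 (act s.1 1))) (p.2 * r.2 * s.2).
Proof.
rewrite SM1.
under eq_bigr => t _ do rewrite SM2 /=.
have hf : bilinear_form (fun a g => \sum_(s <- Delta w) \sum_(q <- Delta g)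
          f (a * act q.1 (act s.1 1)) (q.2 * s.2)) by bilin.
apply: etrans (E2 (BForm hf) x y) _ => /=.
rewrite exchange_big /=.
under eq_bigr => r _ do rewrite exchange_big /=.
under eq_bigr => r _ do under eq_bigr => s _ do rewrite assoc_core.
under eq_bigr => r _ do rewrite exchange_big /=.
under eq_bigr => r _ do under eq_bigr => p _ do rewrite exchange_big /=.
under eq_bigr => r _ do rewrite exchange_big /=.
coas.
under eq_bigr => r _ do rewrite exchange_big /=.
under eq_bigr => r _ do under eq_bigr => p _ do rewrite exchange_big /=.
under eq_bigr => r _ do under eq_bigr => p _ do under eq_bigr => s _ do rewrite mod_mulin.
rewrite exchange_big /=; apply: eq_bigr => p _; apply: eq_bigr => r _; apply: eq_bigr => s _.
by [].
Qed.


Lemma bil_sum1 (F : H * H -> K) I (s : seq I) (G : I -> H) v : bil F ->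
  F (\sum_(i <- s) G i, v) = \sum_(i <- s) F (G i, v).
Proof. by case=> h1 _; exact: (kform_sum _ _ (h1 v)). Qed.
Lemma bil_sum2 (F : H * H -> K) I (s : seq I) (G : I -> H) v : bil F ->
  F (v, \sum_(i <- s) G i) = \sum_(i <- s) F (v, G i).
Proof. by case=> _ h2; exact: (kform_sum _ _ (h2 v)). Qed.
Lemma bil_Z1 (F : H * H -> K) c u v : bil F -> F (c *: u, v) = c * F (u, v).
Proof. by case=> h1 _; exact: (kformZ _ _ (h1 v)). Qed.
Lemma bil_Z2 (F : H * H -> K) c u v : bil F -> F (v, c *: u) = c * F (v, u).
Proof. by case=> _ h2; exact: (kformZ _ _ (h2 v)). Qed.

Lemma bilD1 (F : H * H -> K) : bil F -> forall a x y w, F (a *: x + y, w) = a * F (x, w) + F (y, w).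
Proof. by case=> h1 _ a x y w; apply: (h1 w). Qed.
Lemma bilD2 (F : H * H -> K) : bil F -> forall a x y w, F (w, a *: x + y) = a * F (w, x) + F (w, y).
Proof. by case=> _ h2 a x y w; apply: (h2 w). Qed.
Ltac extra ::= match goal with
  | D : forall (a : _) (x y w : _), _ (a *: x + y, w) = _ |- _ => progress rewrite ?D
  | D : forall (a : _) (x y w : _), _ (w, a *: x + y) = _ |- _ => progress rewrite ?D
  | D : forall (a : _) (x y u v : _), _ (a *: x + y) u v = _ |- _ => progress rewrite ?D
  | D : forall (a : _) (x y : _), _ (a *: x + y) = _ |- _ => progress rewrite ?D
  | D : forall (a : _) (x y u v : _), _ u (a *: x + y) v = _ |- _ => progress rewrite ?D
  | D : forall (a : _) (x y u v : _), _ u v (a *: x + y) = _ |- _ => progress rewrite ?D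
  end.
Lemma triD (F : H -> H -> H -> K) : trilinear_form F ->
  [/\ forall a x y u v, F (a *: x + y) u v = a * F x u v + F y u v,
      forall a x y u v, F u (a *: x + y) v = a * F u x v + F u y v &
      forall a x y u v, F u v (a *: x + y) = a * F u v x + F u v y].
Proof. by case=> h1 h2 h3; split=> a x y u v; [apply: (h1 u v) | apply: (h2 u v) | apply: (h3 u v)]. Qed.

Lemma D1l (F : H * H -> K) h : bil F ->
  \sum_(p <- Delta 1) \sum_(q <- Delta h) F (p.1 * q.1, p.2 * q.2) = \sum_(q <- Delta h) F q.
Proof. by move=> hF; rewrite -Dmul // mul1r. Qed.
Lemma D1r (F : H * H -> K) h : bil F ->
  \sum_(q <- Delta h) \sum_(p <- Delta 1) F (q.1 * p.1, q.2 * p.2) = \sum_(q <- Delta h) F q.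
Proof. by move=> hF; rewrite -Dmul // mulr1. Qed.

Lemma U1 (F : H * H -> H * H -> K) :
  (forall z z' v r, F (z, v) r = F (z', v) r) ->
  trilinear_form (fun a b c => F (0, c) (a, b)) ->
  \sum_(t <- Delta 1) \sum_(r <- Delta t.1) F t r =
  \sum_(q <- Delta 1) \sum_(p <- Delta 1) F (0, q.2) (p.1, q.1 * p.2).
Proof.
move=> hz hF; have := @ax_unit1 (fun a b c => F (0, c) (a, b)) hF.
rewrite /Delta2l !big_allpairs_dep /= => E.
rewrite (_ : \sum_(t <- Delta 1) _ = \sum_(t <- Delta 1) \sum_(r <- Delta t.1) F (0, t.2) (r.1, r.2)).
  by rewrite -E.
apply: eq_bigr => -[u v] _; apply: eq_bigr => -[q1 q2] _ /=.
by rewrite (hz u 0 v).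
Qed.
Lemma U2 (F : H * H -> H * H -> K) :
  (forall z z' v r, F (z, v) r = F (z', v) r) ->
  trilinear_form (fun a b c => F (0, c) (a, b)) ->
  \sum_(t <- Delta 1) \sum_(r <- Delta t.1) F t r =
  \sum_(p <- Delta 1) \sum_(q <- Delta 1) F (0, q.2) (p.1, p.2 * q.1).
Proof.
move=> hz hF; have := @ax_unit2 (fun a b c => F (0, c) (a, b)) hF.
rewrite /Delta2l !big_allpairs_dep /= => E.
rewrite (_ : \sum_(t <- Delta 1) _ = \sum_(t <- Delta 1) \sum_(r <- Delta t.1) F (0, t.2) (r.1, r.2)).
  by rewrite E.
apply: eq_bigr => -[u v] _; apply: eq_bigr => -[q1 q2] _ /=.
by rewrite (hz u 0 v).
Qed.
Ltac u1 := rewrite U1 //=; [|trilin].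
Ltac u2 := rewrite U2 //=; [|trilin].

Lemma epstE x : epst x = \sum_(p <- Delta 1) eps (p.1 * x) *: p.2.
Proof. by []. Qed.
Lemma epssE x : epss x = \sum_(p <- Delta 1) eps (x * p.2) *: p.1.
Proof. by []. Qed.

Lemma Depst1 (F : H * H -> K) x : bil F ->
  \sum_(p <- Delta (epst x)) F p = \sum_(q <- Delta 1) F (q.1 * epst x, q.2).
Proof.
move=> hF; have D1 := bilD1 hF; have D2 := bilD2 hF.
rewrite epstE Dsum //.
under eq_bigr => p _ do rewrite big_distrr /=.
coas. u1.
apply: eq_bigr => q _; rewrite big_distrr /= bil_sum1 //; apply: eq_bigr => p _.
by rewrite -scalerAr bil_Z1.
Qed.
Lemma Depst2 (F : H * H -> K) x : bil F ->
  \sum_(p <- Delta (epst x)) F p = \sum_(q <- Delta 1) F (epst x * q.1, q.2).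
Proof.
move=> hF; have D1 := bilD1 hF; have D2 := bilD2 hF.
rewrite epstE Dsum //.
under eq_bigr => p _ do rewrite big_distrr /=.
coas. u2. rewrite exchange_big /=.
apply: eq_bigr => q _; rewrite big_distrl /= bil_sum1 //; apply: eq_bigr => p _.
by rewrite -scalerAl bil_Z1.
Qed.
Lemma Depss1 (F : H * H -> K) x : bil F ->
  \sum_(p <- Delta (epss x)) F p = \sum_(q <- Delta 1) F (q.1, epss x * q.2).
Proof.
move=> hF; have D1 := bilD1 hF; have D2 := bilD2 hF.
rewrite epssE Dsum //.
under eq_bigr => p _ do rewrite big_distrr /=.
u1. rewrite exchange_big /=.
apply: eq_bigr => q _; rewrite big_distrl /= bil_sum2 //; apply: eq_bigr => p _.
by rewrite -scalerAl bil_Z2.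
Qed.
Lemma Depss2 (F : H * H -> K) x : bil F ->
  \sum_(p <- Delta (epss x)) F p = \sum_(q <- Delta 1) F (q.1, q.2 * epss x).
Proof.
move=> hF; have D1 := bilD1 hF; have D2 := bilD2 hF.
rewrite epssE Dsum //.
under eq_bigr => p _ do rewrite big_distrr /=.
u2.
apply: eq_bigr => q _; rewrite big_distrr /= bil_sum2 //; apply: eq_bigr => p _.
by rewrite -scalerAr bil_Z2.
Qed.

Lemma DmulEt (F : H * H -> K) h x : bil F ->
  \sum_(p <- Delta (h * epst x)) F p = \sum_(p <- Delta h) F (p.1 * epst x, p.2).
Proof.
move=> hF; have D1 := bilD1 hF; have D2 := bilD2 hF.
dmul. under eq_bigr => p _ do (rewrite Depst1 /=; [|bilin]).
rewrite -(D1r (F := fun u => F (u.1 * epst x, u.2))) /=; last by bilin.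
by apply: eq_bigr => p _; apply: eq_bigr => q _; rewrite mulrA.
Qed.
Lemma DEtmul (F : H * H -> K) h x : bil F ->
  \sum_(p <- Delta (epst x * h)) F p = \sum_(p <- Delta h) F (epst x * p.1, p.2).
Proof.
move=> hF; have D1 := bilD1 hF; have D2 := bilD2 hF.
dmul. rewrite Depst2 /=; last by bilin.
rewrite -(D1l (F := fun u => F (epst x * u.1, u.2))) /=; last by bilin.
by apply: eq_bigr => p _; apply: eq_bigr => q _; rewrite mulrA.
Qed.
Lemma DmulEs (F : H * H -> K) h x : bil F ->
  \sum_(p <- Delta (h * epss x)) F p = \sum_(p <- Delta h) F (p.1, p.2 * epss x).
Proof.
move=> hF; have D1 := bilD1 hF; have D2 := bilD2 hF.
dmul. under eq_bigr => p _ do (rewrite Depss2 /=; [|bilin]).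
rewrite -(D1r (F := fun u => F (u.1, u.2 * epss x))) /=; last by bilin.
by apply: eq_bigr => p _; apply: eq_bigr => q _; rewrite mulrA.
Qed.
Lemma DEsmul (F : H * H -> K) h x : bil F ->
  \sum_(p <- Delta (epss x * h)) F p = \sum_(p <- Delta h) F (p.1, epss x * p.2).
Proof.
move=> hF; have D1 := bilD1 hF; have D2 := bilD2 hF.
dmul. rewrite Depss1 /=; last by bilin.
rewrite -(D1l (F := fun u => F (u.1, epss x * u.2))) /=; last by bilin.
by apply: eq_bigr => p _; apply: eq_bigr => q _; rewrite mulrA.
Qed.

Lemma D1l' (F : H * H -> K) (G : H * H -> H * H -> K) h : bil F ->
  (forall p q, G p q = F (p.1 * q.1, p.2 * q.2)) ->
  \sum_(p <- Delta 1) \sum_(q <- Delta h) G p q = \sum_(q <- Delta h) F q.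
Proof. by move=> hF hG; rewrite -D1l //; do 2!apply: eq_bigr => ? _. Qed.
Lemma D1r' (F : H * H -> K) (G : H * H -> H * H -> K) h : bil F ->
  (forall p q, G q p = F (q.1 * p.1, q.2 * p.2)) ->
  \sum_(q <- Delta h) \sum_(p <- Delta 1) G q p = \sum_(q <- Delta h) F q.
Proof. by move=> hF hG; rewrite -D1r //; do 2!apply: eq_bigr => ? _. Qed.
Ltac d1l F := rewrite (D1l' (F := F)) /=; [|bilin|by []].
Ltac d1r F := rewrite (D1r' (F := F)) /=; [|bilin|by []].

Lemma F3 (F : H * H -> K) h : bil F ->
  \sum_(p <- Delta h) F (p.1, epst p.2) = \sum_(q <- Delta 1) F (q.1 * h, q.2).
Proof.
move=> hF; have D1 := bilD1 hF; have D2 := bilD2 hF.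
symmetry.
under eq_bigr => q _ do (rewrite -(Dcounit2 (g := fun v => F (v, q.2))) /=; [|by move=> *; rewrite D1]).
under eq_bigr => q _ do (rewrite Dmul /=; [|bilin]).
u1.
under eq_bigr => q _ do under eq_bigr => p _ do under eq_bigr => t _ do rewrite -mulrA.
under eq_bigr => q _ do d1l (fun u : H * H => eps (q.1 * u.2) * F (u.1, q.2)).
rewrite exchange_big /=; apply: eq_bigr => t _.
by rewrite epstE bil_sum2 //; apply: eq_bigr => q _; rewrite bil_Z2.
Qed.

Lemma F3' (F : H * H -> K) h : bil F ->
  \sum_(p <- Delta h) F (epss p.1, p.2) = \sum_(q <- Delta 1) F (q.1, h * q.2).
Proof.
move=> hF; have D1 := bilD1 hF; have D2 := bilD2 hF.
symmetry.
under eq_bigr => q _ do (rewrite -(Dcounit1 (g := fun v => F (q.1, v))) /=; [|by move=> *; rewrite D2]).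
under eq_bigr => q _ do (rewrite Dmul /=; [|bilin]).
under eq_bigr => q _ do rewrite exchange_big /=.
coas.
u1.
rewrite exchange_big /=.
under eq_bigr => p _ do rewrite exchange_big /=.
under eq_bigr => p _ do under eq_bigr => i _ do under eq_bigr => q _ do rewrite mulrA.
under eq_bigr => p _ do d1r (fun u : H * H => eps (u.1 * p.2) * F (p.1, u.2)).
rewrite exchange_big /=; apply: eq_bigr => t _.
by rewrite epssE bil_sum1 //; apply: eq_bigr => q _; rewrite bil_Z1.
Qed.

Lemma epsEs h w : eps (epss h * w) = eps (h * w).
Proof.
rewrite epssE big_distrl /= (kform_sum _ _ (fun a x y => epsD a x y)).
have := (ax_epsmul h 1 w).2; rewrite mulr1 => ->; apply: eq_bigr => p _.
by rewrite -scalerAl (kformZ _ _ (fun a x y => epsD a x y)) mulrC.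
Qed.
Lemma epsEt h w : eps (w * epst h) = eps (w * h).
Proof.
rewrite epstE big_distrr /= (kform_sum _ _ (fun a x y => epsD a x y)).
have := (ax_epsmul w 1 h).2; rewrite mulr1 => ->; apply: eq_bigr => p _.
by rewrite -scalerAr (kformZ _ _ (fun a x y => epsD a x y)) mulrC.
Qed.
Lemma epss_mul h g : epss (h * g) = epss (epss h * g).
Proof. by rewrite !epssE; apply: eq_bigr => p _; rewrite -!mulrA epsEs. Qed.
Lemma epst_mul h g : epst (h * g) = epst (h * epst g).
Proof. by rewrite !epstE; apply: eq_bigr => p _; rewrite !mulrA epsEt. Qed.



Lemma lf_sum (L : lform) I (s : seq I) (G : I -> H) : L (\sum_(i <- s) G i) = \sum_(i <- s) L (G i).
Proof. by case: L => L hL /=; rewrite kform_sum. Qed.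
Lemma lfZ (L : lform) c x : L (c *: x) = c * L x.
Proof. by case: L => L hL /=; rewrite kformZ. Qed.

Lemma DSt' (g : H -> K) (G : H * H -> K) h : kform g -> (forall p, G p = g (p.1 * S p.2)) ->
  \sum_(p <- Delta h) G p = g (epst h).
Proof. by move=> hg hG; rewrite -DSt //; apply: eq_bigr => p _. Qed.
Lemma DSs' (g : H -> K) (G : H * H -> K) h : kform g -> (forall p, G p = g (S p.1 * p.2)) ->
  \sum_(p <- Delta h) G p = g (epss h).
Proof. by move=> hg hG; rewrite -DSs //; apply: eq_bigr => p _. Qed.
Lemma Dmul' (F : H * H -> K) (G : H * H -> H * H -> K) x y : bil F ->
  (forall p q, G p q = F (p.1 * q.1, p.2 * q.2)) ->
  \sum_(p <- Delta x) \sum_(q <- Delta y) G p q = \sum_(p <- Delta (x * y)) F p.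
Proof. by move=> hF hG; rewrite Dmul //; do 2!apply: eq_bigr => ? _. Qed.

Lemma SS3a (L : lform) h : L (S h) = \sum_(p <- Delta h) L (S p.1 * epst p.2).
Proof.
rewrite ax_S3 lf_sum /Delta2l big_allpairs_dep /=.
coas'.
apply: eq_bigr => t _; rewrite -ax_St big_distrr /= lf_sum; apply: eq_bigr => q _.
by rewrite mulrA.
Qed.
Lemma SS3b (L : lform) h : L (S h) = \sum_(p <- Delta h) L (epss p.1 * S p.2).
Proof.
rewrite ax_S3 lf_sum /Delta2l big_allpairs_dep /=.
apply: eq_bigr => t _; rewrite -ax_Ss big_distrl /= lf_sum.
by apply: eq_bigr => q _.
Qed.
Lemma SS3a' (g : H -> K) (G : H * H -> K) h : kform g -> (forall p, G p = g (S p.1 * epst p.2)) ->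
  \sum_(p <- Delta h) G p = g (S h).
Proof. by move=> hg hG; rewrite -[RHS]/(LForm hg (S h)) SS3a; apply: eq_bigr. Qed.
Lemma SS3b' (g : H -> K) (G : H * H -> K) h : kform g -> (forall p, G p = g (epss p.1 * S p.2)) ->
  \sum_(p <- Delta h) G p = g (S h).
Proof. by move=> hg hG; rewrite -[RHS]/(LForm hg (S h)) SS3b; apply: eq_bigr. Qed.

Ltac dst g := rewrite (DSt' (g := g)) /=; [|kf|by []].
Ltac dss g := rewrite (DSs' (g := g)) /=; [|kf|by []].
Ltac undmul F := rewrite (Dmul' (F := F)) /=; [|bilin|by []].
Ltac ss3a g := rewrite (SS3a' (g := g)) /=; [|kf|by []].
Ltac ss3b g := rewrite (SS3b' (g := g)) /=; [|kf|by []].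

Ltac get_lhs := lazymatch goal with |- Under_rel _ _ ?L _ => L | |- ?L = _ => L end.
Ltac wrw W := let L := get_lhs in
  lazymatch type of W with weqH ?t ?t' =>
   let C := eval pattern t in L in
   lazymatch C with ?F _ =>
     let hk := fresh "hk" in
     have hk : kform F; [kf|];
     rewrite (_ : L = F t'); [cbv beta; clear hk | exact: (W (LForm hk))]
   end end.

Lemma WEs h g : weqH (epss (h * g)) (\sum_(p <- Delta g) S p.1 * (epss h * p.2)).
Proof.
move=> L; rewrite epss_mul -ax_Ss lf_sum lf_sum.
by rewrite (DEsmul (F := fun u => L (S u.1 * u.2))) //; bilin.
Qed.
Lemma WEt h g : weqH (epst (h * g)) (\sum_(p <- Delta h) p.1 * epst g * S p.2).
Proof.
move=> L; rewrite epst_mul -ax_St lf_sum lf_sum.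
by rewrite (DmulEt (F := fun u => L (u.1 * S u.2))) //; bilin.
Qed.
Lemma Comm x w : weqH (epss x * epst w) (epst w * epss x).
Proof.
move=> L.
have E : \sum_(q <- Delta 1) \sum_(p <- Delta 1) eps (x * q.2) * eps (p.1 * w) * L (q.1 * p.2) =
         \sum_(p <- Delta 1) \sum_(q <- Delta 1) eps (x * q.2) * eps (p.1 * w) * L (p.2 * q.1).
  rewrite -(U1 (F := fun t r => eps (x * t.2) * eps (r.1 * w) * L r.2)) //=; last by trilin.
  by rewrite (U2 (F := fun t r => eps (x * t.2) * eps (r.1 * w) * L r.2)) //=; trilin.
transitivity (\sum_(q <- Delta 1) \sum_(p <- Delta 1) eps (x * q.2) * eps (p.1 * w) * L (q.1 * p.2)).
  rewrite epssE epstE big_distrl /= lf_sum; apply: eq_bigr => q _.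
  rewrite big_distrr /= lf_sum; apply: eq_bigr => p _.
  by rewrite -scalerAl -scalerAr !lfZ mulrA.
rewrite E epssE epstE big_distrl /= lf_sum; apply: eq_bigr => p _.
rewrite big_distrr /= lf_sum; apply: eq_bigr => q _.
by rewrite -scalerAl -scalerAr !lfZ mulrCA mulrA.
Qed.

Lemma antimul h g : weqH (S (h * g)) (S g * S h).
Proof.
move=> L.
rewrite SS3b; dmul.
under eq_bigr => a _ do under eq_bigr => b _ do wrw (WEs a.1 b.1).
under eq_bigr => a _ do under eq_bigr => b _ do rewrite big_distrl /= lf_sum.
under eq_bigr => a _ do coas'.
under eq_bigr => a _ do under eq_bigr => b _ do under eq_bigr => c _ do
  rewrite -ax_Ss big_distrl /= big_distrr /= big_distrl /= lf_sum.
under eq_bigr => a _ do under eq_bigr => b _ do rewrite exchange_big /=.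
under eq_bigr => a _ do rewrite exchange_big /=.
coas'.
under eq_bigr => a _ do rewrite exchange_big /=.
under eq_bigr => a _ do under eq_bigr => b _ do under eq_bigr => i _ do under eq_bigr => c _ do
  rewrite -[S a.1 * i.1 * c.1]mulrA.
under eq_bigr => a _ do under eq_bigr => b _ do undmul (fun u : H * H => L (S b.1 * (S a.1 * u.1) * S u.2)).
under eq_bigr => a _ do under eq_bigr => b _ do under eq_bigr => e _ do
  rewrite -mulrA -[S a.1 * e.1 * _]mulrA.
under eq_bigr => a _ do under eq_bigr => b _ do dst (fun v => L (S b.1 * (S a.1 * v))).
under eq_bigr => a _ do under eq_bigr => b _ do wrw (WEt a.2 b.2).
under eq_bigr => a _ do under eq_bigr => b _ do rewrite !big_distrr /= lf_sum.
under eq_bigr => a _ do rewrite exchange_big /=.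
coas.
under eq_bigr => a _ do rewrite exchange_big /=.
under eq_bigr => a _ do under eq_bigr => b _ do under eq_bigr => q _ do
  rewrite -[q.2 * _ * S a.2]mulrA [S q.1 * (q.2 * _)]mulrA.
under eq_bigr => a _ do under eq_bigr => b _ do dss (fun v => L (S b.1 * (v * (epst b.2 * S a.2)))).
under eq_bigr => a _ do under eq_bigr => b _ do rewrite [epss a.1 * (_ * _)]mulrA.
under eq_bigr => a _ do under eq_bigr => b _ do wrw (Comm a.1 b.2).
under eq_bigr => a _ do under eq_bigr => b _ do rewrite -[epst b.2 * epss a.1 * S a.2]mulrA mulrA.
under eq_bigr => a _ do ss3a (fun v => L (v * (epss a.1 * S a.2))).
by ss3b (fun v => L (S g * v)).
Qed.


Lemma F3g (F : H * H -> K) (G : H * H -> K) h : bil F -> (forall p, G p = F (p.1, epst p.2)) ->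
  \sum_(p <- Delta h) G p = \sum_(q <- Delta 1) F (q.1 * h, q.2).
Proof. by move=> hF hG; rewrite -F3 //; apply: eq_bigr. Qed.
Lemma F3r (F : H * H -> K) (G : H * H -> K) h : bil F -> (forall q, G q = F (q.1 * h, q.2)) ->
  \sum_(q <- Delta 1) G q = \sum_(p <- Delta h) F (p.1, epst p.2).
Proof. by move=> hF hG; rewrite F3 //; apply: eq_bigr. Qed.
Lemma F3'g (F : H * H -> K) (G : H * H -> K) h : bil F -> (forall p, G p = F (epss p.1, p.2)) ->
  \sum_(p <- Delta h) G p = \sum_(q <- Delta 1) F (q.1, h * q.2).
Proof. by move=> hF hG; rewrite -F3' //; apply: eq_bigr. Qed.
Lemma F3'r (F : H * H -> K) (G : H * H -> K) h : bil F -> (forall q, G q = F (q.1, h * q.2)) ->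
  \sum_(q <- Delta 1) G q = \sum_(p <- Delta h) F (epss p.1, p.2).
Proof. by move=> hF hG; rewrite F3' //; apply: eq_bigr. Qed.
Ltac f3g F := rewrite (F3g (F := F)) /=; [|bilin|by []].
Ltac f3r F h := rewrite (F3r (F := F) (h := h)) /=; [|bilin|by move=> ?; rewrite ?mulr1 ?mul1r].
Ltac f3'g F := rewrite (F3'g (F := F)) /=; [|bilin|by []].
Ltac f3'r F h := rewrite (F3'r (F := F) (h := h)) /=; [|bilin|by move=> ?; rewrite ?mulr1 ?mul1r].

Lemma F7 x : weqH (S (epss x)) (epst (epss x)).
Proof.
move=> L; rewrite SS3b (Depss1 (F := fun u => L (epss u.1 * S u.2))) /=; last by bilin.
f3'g (fun u : H * H => L (u.1 * S (epss x * u.2))).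
rewrite -ax_St lf_sum (Depss1 (F := fun u => L (u.1 * S u.2))) /=; last by bilin.
by apply: eq_bigr => q _; rewrite mul1r.
Qed.
Lemma F7' x : weqH (S (epst x)) (epss (epst x)).
Proof.
move=> L; rewrite SS3a (Depst1 (F := fun u => L (S u.1 * epst u.2))) /=; last by bilin.
f3g (fun u : H * H => L (S (u.1 * epst x) * u.2)).
rewrite -ax_Ss lf_sum (Depst1 (F := fun u => L (S u.1 * u.2))) /=; last by bilin.
by apply: eq_bigr => q _; rewrite mulr1.
Qed.

Lemma F5 (F : H * H -> K) : bil F ->
  \sum_(p <- Delta 1) F (S p.1, S p.2) = \sum_(p <- Delta 1) F (p.2, p.1).
Proof.
move=> hF; have D1 := bilD1 hF; have D2 := bilD2 hF.
f3'r (fun u : H * H => F (S u.1, S u.2)) (1 : H).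
f3r (fun u : H * H => F (S (epss u.1), S u.2)) (1 : H).
under eq_bigr => p _ do wrw (F7 p.1).
under eq_bigr => p _ do wrw (F7' p.2).
f3g (fun u : H * H => F (epst (epss u.1), epss u.2)).
under eq_bigr => q _ do rewrite mulr1.
f3'g (fun u : H * H => F (epst u.1, epss u.2)).
under eq_bigr => q _ do rewrite mul1r epstE epssE bil_sum1 //.
under eq_bigr => q _ do under eq_bigr => a _ do rewrite bil_Z1 // bil_sum2 // big_distrr /=.
under eq_bigr => q _ do under eq_bigr => a _ do under eq_bigr => b _ do rewrite bil_Z2 // mulrA.
rewrite exchange_big /=.
under eq_bigr => a _ do rewrite exchange_big /=.
under eq_bigr => a _ do under eq_bigr => b _ do rewrite -big_distrl /= (ax_epsmul a.1 1 b.2).1 mulr1.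
rewrite exchange_big /=.
under eq_bigr => b _ do under eq_bigr => a _ do rewrite -(bil_Z1 _ _ _ hF).
under eq_bigr => b _ do rewrite -(bil_sum1 _ _ _ hF) -epstE.
f3g (fun u : H * H => F (u.2, u.1)).
by under eq_bigr => q _ do rewrite mulr1.
Qed.


Lemma weq_sym x y : weqH x y -> weqH y x.
Proof. by move=> W L; rewrite W. Qed.
Lemma Dsum' (F : H * H -> K) I (s : seq I) (v : I -> H) : bil F ->
  \sum_(q <- Delta (\sum_(i <- s) v i)) F q = \sum_(i <- s) \sum_(q <- Delta (v i)) F q.
Proof.
move=> hF; rewrite (eq_bigr (fun i => 1 *: v i)) => [|i _]; last by rewrite scale1r.
by rewrite Dsum //; apply: eq_bigr => i _; rewrite mul1r.
Qed.
Lemma Dlf (F : H * H -> K) : bil F -> kform (fun x => \sum_(p <- Delta x) F p).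
Proof. by move=> hF a x y; rewrite Dlin. Qed.
Lemma DSt_D (F : H * H -> K) x : bil F ->
  \sum_(b <- Delta x) \sum_(e <- Delta (b.1 * S b.2)) F e = \sum_(e <- Delta (epst x)) F e.
Proof. by move=> hF; rewrite -ax_St Dsum'. Qed.

Lemma BDg (G : H * H -> K) (Gb : H * H -> K) x : bil G -> (forall q, Gb q = G (q.1, epss x * q.2)) ->
  \sum_(q <- Delta 1) Gb q = \sum_(a <- Delta x) \sum_(b <- Delta a.2) G (epss b.1, S a.1 * b.2).
Proof.
move=> hG hGb; have D1 := bilD1 hG; have D2 := bilD2 hG.
rewrite (eq_bigr _ (fun q _ => hGb q)) /= -ax_Ss.
under eq_bigr => q _ do rewrite big_distrl /= bil_sum2 //.
rewrite exchange_big /=; apply: eq_bigr => a _.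
under eq_bigr => q _ do rewrite -mulrA.
by f3'r (fun u : H * H => G (u.1, S a.1 * u.2)) a.2.
Qed.

Lemma F5r (F : H * H -> K) (G : H * H -> K) : bil F -> (forall p, G p = F (p.2, p.1)) ->
  \sum_(p <- Delta 1) G p = \sum_(p <- Delta 1) F (S p.1, S p.2).
Proof. by move=> hF hG; rewrite F5 //; apply: eq_bigr. Qed.

Lemma DS (F : H * H -> K) h : bil F ->
  \sum_(p <- Delta (S h)) F p = \sum_(p <- Delta h) F (S p.2, S p.1).
Proof.
move=> hF; have D1 := bilD1 hF; have D2 := bilD2 hF.
rewrite -[LHS]/(LForm (Dlf hF) (S h)) SS3b /=.
under eq_bigr => t _ do (rewrite Dmul /=; [|bilin]).
under eq_bigr => t _ do (rewrite (Depss1 (F := fun u => \sum_(r <- Delta (S t.2)) F (u.1 * r.1, u.2 * r.2))) /=; [|bilin]).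
under eq_bigr => t _ do (rewrite (BDg (x := t.1) (G := fun u => \sum_(r <- Delta (S t.2)) F (u.1 * r.1, u.2 * r.2))) /=; [|bilin|by []]).
under eq_bigr => t _ do under eq_bigr => a _ do under eq_bigr => b _ do under eq_bigr => r _ do
  rewrite -ax_Ss big_distrl /= bil_sum1 //.
under eq_bigr => t _ do under eq_bigr => a _ do under eq_bigr => b _ do rewrite exchange_big /=.
under eq_bigr => t _ do under eq_bigr => a _ do coas'.
under eq_bigr => t _ do under eq_bigr => a _ do under eq_bigr => b _ do under eq_bigr => c _ do
  under eq_bigr => r _ do rewrite -!mulrA.
under eq_bigr => t _ do under eq_bigr => a _ do under eq_bigr => b _ do
  undmul (fun u : H * H => F (S b.1 * u.1, S a.1 * u.2)).
coas'.
under eq_bigr => t _ do coas'.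
under eq_bigr => t _ do under eq_bigr => q _ do (rewrite DSt_D /=; [|bilin]).
under eq_bigr => t _ do under eq_bigr => q _ do (rewrite Depst2 /=; [|bilin]).
under eq_bigr => t _ do under eq_bigr => q _ do under eq_bigr => p _ do rewrite mulrA.
under eq_bigr => t _ do rewrite exchange_big /=.
under eq_bigr => t _ do under eq_bigr => p _ do ss3a (fun v => F (v * p.1, S t.1 * p.2)).
under eq_bigr => t _ do (rewrite (F5r (F := fun u => F (S t.2 * u.2, S t.1 * u.1))) /=; [|bilin|by []]).
under eq_bigr => t _ do under eq_bigr => p _ do wrw (weq_sym (antimul p.2 t.2)).
under eq_bigr => t _ do under eq_bigr => p _ do wrw (weq_sym (antimul p.1 t.1)).
rewrite exchange_big /=.
by d1l (fun u : H * H => F (S u.2, S u.1)).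
Qed.


Lemma af_sum (g : aform) I (s : seq I) (G : I -> A) : g (\sum_(i <- s) G i) = \sum_(i <- s) g (G i).
Proof. by case: g => g hg /=; rewrite kform_sum. Qed.

Ltac wrwA W := let L := get_lhs in
  lazymatch type of W with weqA ?t ?t' =>
   let C := eval pattern t in L in
   lazymatch C with ?F _ =>
     let hk := fresh "hk" in
     have hk : kform F; [kf|];
     rewrite (_ : L = F t'); [cbv beta; clear hk | exact: (W (AForm hk))]
   end end.

Lemma T1 x k a : weqA (act (epst x) (act k a)) (act (epst x * k) a).
Proof.
move=> g; rewrite ax_M6 af_sum (Depst1 (F := fun u => g (act (u.1 * k) a * act u.2 1))) /=; last by bilin.
transitivity (g (act 1 (act (epst x * k) a))); last by rewrite ax_mod_1.
by rewrite ax_M6 af_sum; apply: eq_bigr => q _; rewrite mulrA.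
Qed.
Lemma T2 x k a : weqA (act (epss x) (act k a)) (act (epss x * k) a).
Proof.
move=> g; rewrite ax_M5 af_sum (Depss2 (F := fun u => g (act u.1 1 * act (u.2 * k) a))) /=; last by bilin.
transitivity (g (act 1 (act (epss x * k) a))); last by rewrite ax_mod_1.
by rewrite ax_M5 af_sum; apply: eq_bigr => q _; rewrite mulrA.
Qed.
Lemma T3 h x : weqA (act h (act (epst x) 1)) (act (h * epst x) 1).
Proof.
move=> g; rewrite -{2}(mulr1 (1 : A)) ax_mod_mul af_sum.
rewrite (DmulEt (F := fun u => g (act u.1 1 * act u.2 1))) /=; last by bilin.
by rewrite ax_M6 af_sum.
Qed.
Lemma T4 h x : weqA (act h (act (epss x) 1)) (act (h * epss x) 1).
Proof.
move=> g; rewrite -{2}(mulr1 (1 : A)) ax_mod_mul af_sum.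
rewrite (DmulEs (F := fun u => g (act u.1 1 * act u.2 1))) /=; last by bilin.
by rewrite ax_M5 af_sum.
Qed.


Lemma sum_flat I (F : A * H -> K) (X : I -> seq (A * H)) (s : seq I) :
  \sum_(t <- flatten [seq X p | p <- s]) F t = \sum_(p <- s) \sum_(t <- X p) F t.
Proof. by rewrite big_flatten big_map. Qed.

Lemma mod_mul4 (f : bform) x X a b w :
  \sum_(q <- Delta x) f (X * (act q.1 a * act q.2 b)) w = f (X * act x (a * b)) w.
Proof. by rewrite ax_mod_mul big_distrr /= bf_sum1. Qed.

Lemma mod_mul5 (f : bform) x X a b w :
  \sum_(q <- Delta x) f (X * act q.1 a * act q.2 b) w = f (X * act x (a * b)) w.
Proof. by rewrite -mod_mul4; apply: eq_bigr => q _; rewrite mulrA. Qed.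

Lemma TT3 (f : bform) x y X m :
  \sum_(i <- Delta x) \sum_(e <- Delta (epst y)) f (X * act i.1 (act e.1 1)) (i.2 * e.2 * m) =
  \sum_(i <- Delta x) \sum_(e <- Delta (epst y)) f (X * act (i.1 * e.1) 1) (i.2 * e.2 * m).
Proof.
under eq_bigr => i _ do (rewrite Depst1 /=; [|bilin]).
under [RHS]eq_bigr => i _ do (rewrite Depst1 /=; [|bilin]).
under [RHS]eq_bigr => i _ do under eq_bigr => q _ do rewrite mulrA.
symmetry; d1r (fun u : H * H => f (X * act (u.1 * epst y) 1) (u.2 * m)); symmetry.
under eq_bigr => i _ do under eq_bigr => q _ do rewrite ax_M5 big_distrr /= bf_sum1.
under eq_bigr => i _ do rewrite exchange_big /=.
coas'.
under eq_bigr => i _ do under eq_bigr => c _ do under eq_bigr => q _ do rewrite !mulrA.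
under eq_bigr => i _ do d1r (fun u : H * H => f (X * act i.1 1 * act (u.1 * epst y) 1) (u.2 * m)).
rewrite -(Dcoas' (G := fun i c => f (X * act c.1 1 * act (c.2 * epst y) 1) (i.2 * m))) //=; last by trilin.
apply: eq_bigr => t _.
rewrite (_ : \sum_(q <- Delta t.1) _ = f (X * act t.1 (act (epst y) 1)) (t.2 * m)).
  by wrwA (T3 t.1 y).
by rewrite ax_M5 big_distrr /= bf_sum1; apply: eq_bigr => q _; rewrite mulrA.
Qed.
Lemma TT3' (f : bform) x y X :
  \sum_(i <- Delta x) \sum_(e <- Delta (epst y)) f (X * act i.1 (act e.1 1)) (i.2 * e.2) =
  \sum_(i <- Delta x) \sum_(e <- Delta (epst y)) f (X * act (i.1 * e.1) 1) (i.2 * e.2).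
Proof.
have := TT3 f x y X 1.
under eq_bigr => i _ do under eq_bigr => e _ do rewrite mulr1.
by under [in X in _ = X -> _]eq_bigr => i _ do under eq_bigr => e _ do rewrite mulr1.
Qed.

Lemma PR2 (f : bform) h k :
  \sum_(t <- flatten [seq smul (smul (pi h) (pi p.1)) (pi (S p.2)) | p <- Delta k]) f t.1 t.2 =
  \sum_(t <- flatten [seq smul (pi (h * p.1)) (pi (S p.2)) | p <- Delta k]) f t.1 t.2.
Proof.
rewrite !sum_flat.
under eq_bigr => p _ do rewrite E3.
under [RHS]eq_bigr => p _ do rewrite E2.
under eq_bigr => p _ do under eq_bigr => a _ do under eq_bigr => r _ do under eq_bigr => s _ do
  rewrite [act r.1 _]ax_M5 act_sum2 bf_sum1.
under eq_bigr => p _ do under eq_bigr => a _ do under eq_bigr => r _ do rewrite exchange_big /=.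
under eq_bigr => p _ do under eq_bigr => a _ do coas'.
under eq_bigr => p _ do under eq_bigr => a _ do under eq_bigr => r _ do under eq_bigr => c _ do
  under eq_bigr => s _ do rewrite -mulrA.
under eq_bigr => p _ do under eq_bigr => a _ do under eq_bigr => r _ do
  undmul (fun u : H * H => f (act a.1 (act r.1 1 * act u.1 1)) (a.2 * u.2)).
under eq_bigr => p _ do rewrite exchange_big /=.
coas'.
under eq_bigr => p _ do rewrite exchange_big /=.
under eq_bigr => p _ do under eq_bigr => a _ do (rewrite DSt_D /=; [|bilin]).
under eq_bigr => p _ do under eq_bigr => a _ do under eq_bigr => e _ do
  rewrite ax_mod_mul bf_sum1.
under eq_bigr => p _ do under eq_bigr => a _ do under eq_bigr => e _ do under eq_bigr => i _ do
  rewrite [act i.1 (act p.1 1)]ax_M6 big_distrl /= bf_sum1.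
under eq_bigr => p _ do under eq_bigr => a _ do under eq_bigr => e _ do coas'.
under eq_bigr => p _ do under eq_bigr => a _ do under eq_bigr => e _ do under eq_bigr => i _ do
  rewrite mod_mul5 mul1r.
under eq_bigr => p _ do under eq_bigr => a _ do rewrite exchange_big /=.
under eq_bigr => p _ do coas'.
under eq_bigr => p _ do under eq_bigr => a _ do rewrite (TT3' f a.2 p.2 (act (a.1 * p.1) 1)).
symmetry.
under eq_bigr => p _ do (rewrite Dmul /=; [|bilin]).
under eq_bigr => p _ do under eq_bigr => a _ do under eq_bigr => r _ do under eq_bigr => s _ do
  rewrite ax_M5 bf_sum1.
under eq_bigr => p _ do under eq_bigr => a _ do under eq_bigr => r _ do under eq_bigr => s _ do
  (rewrite Dmul /=; [|bilin]).
under eq_bigr => p _ do under eq_bigr => a _ do under eq_bigr => r _ do rewrite exchange_big /=.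
under eq_bigr => p _ do under eq_bigr => a _ do rewrite exchange_big /=.
under eq_bigr => p _ do coas'.
under eq_bigr => p _ do under eq_bigr => a _ do under eq_bigr => u _ do under eq_bigr => r _ do
  rewrite exchange_big /=.
under eq_bigr => p _ do under eq_bigr => a _ do under eq_bigr => u _ do coas'.
under eq_bigr => p _ do under eq_bigr => a _ do under eq_bigr => u _ do under eq_bigr => r _ do
  under eq_bigr => v _ do under eq_bigr => s _ do rewrite -!mulrA.
under eq_bigr => p _ do under eq_bigr => a _ do under eq_bigr => u _ do under eq_bigr => r _ do
  undmul (fun w : H * H => f (act (a.1 * r.1) 1 * act (u.1 * w.1) 1) (u.2 * w.2)).
under eq_bigr => p _ do under eq_bigr => a _ do rewrite exchange_big /=.
under eq_bigr => p _ do rewrite exchange_big /=.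
coas'.
under eq_bigr => p _ do rewrite exchange_big /=.
under eq_bigr => p _ do under eq_bigr => a _ do rewrite exchange_big /=.
by under eq_bigr => p _ do under eq_bigr => a _ do under eq_bigr => u _ do (rewrite DSt_D /=; [|bilin]).
Qed.


Lemma N5 (F : H -> H -> H -> K) (G : H * H -> H * H -> H * H -> K) h : trilinear_form F ->
  (forall w c y, G w c y = F (c.1 * y.1) c.2 (w.2 * y.2)) ->
  \sum_(p <- Delta h) \sum_(w <- Delta (S p.1)) \sum_(c <- Delta w.1) \sum_(y <- Delta p.2) G w c y =
  \sum_(p <- Delta h) \sum_(q <- Delta p.2) \sum_(r <- Delta q.2) F (epss r.1) (S q.1) (S p.1 * r.2).
Proof.
move=> hF hG; have [T1' T2' T3'] := triD hF.
under eq_bigr => p _ do under eq_bigr => w _ do under eq_bigr => c _ do under eq_bigr => y _ do rewrite hG.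
under eq_bigr => p _ do (rewrite DS /=; [|bilin]).
under eq_bigr => p _ do under eq_bigr => a _ do (rewrite DS /=; [|bilin]).
coas'.
under eq_bigr => p _ do coas'.
under eq_bigr => p _ do under eq_bigr => q _ do coas.
by under eq_bigr => p _ do under eq_bigr => q _ do under eq_bigr => r _ do
  dss (fun v => F v (S q.1) (S p.1 * r.2)).
Qed.


Lemma PR5 (f : bform) h k :
  \sum_(t <- flatten [seq smul (smul (pi (S p.1)) (pi p.2)) (pi k) | p <- Delta h]) f t.1 t.2 =
  \sum_(t <- flatten [seq smul (pi (S p.1)) (pi (p.2 * k)) | p <- Delta h]) f t.1 t.2.
Proof.
rewrite !sum_flat.
under eq_bigr => p _ do rewrite E3.
under [RHS]eq_bigr => p _ do rewrite E2.
under eq_bigr => p _ do under eq_bigr => w _ do under eq_bigr => y _ do under eq_bigr => s _ do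
  rewrite [act w.1 _]ax_M6 bf_sum1.
under eq_bigr => p _ do under eq_bigr => w _ do under eq_bigr => y _ do rewrite exchange_big /=.
under eq_bigr => p _ do under eq_bigr => w _ do rewrite exchange_big /=.
rewrite (N5 (F := fun u v t => \sum_(s <- Delta k) f (act u (act s.1 1) * act v 1) (t * s.2))) /=;
  [|trilin|by []].
under [RHS]eq_bigr => p _ do under eq_bigr => w _ do (rewrite Dmul /=; [|bilin]).
under [RHS]eq_bigr => p _ do under eq_bigr => w _ do under eq_bigr => y _ do under eq_bigr => s _ do
  rewrite [act w.1 _]ax_M6 bf_sum1.
under [RHS]eq_bigr => p _ do under eq_bigr => w _ do under eq_bigr => y _ do under eq_bigr => s _ do
  under eq_bigr => c _ do rewrite !mulrA.
under [RHS]eq_bigr => p _ do under eq_bigr => w _ do under eq_bigr => y _ do rewrite exchange_big /=.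
under [RHS]eq_bigr => p _ do under eq_bigr => w _ do rewrite exchange_big /=.
rewrite (N5 (F := fun u v t => \sum_(s <- Delta k) f (act (u * s.1) 1 * act v 1) (t * s.2))) /=;
  [|trilin|by []].
apply: eq_bigr => p _; apply: eq_bigr => q _; apply: eq_bigr => r _; apply: eq_bigr => s _.
by wrwA (T2 r.1 s.1 1).
Qed.


Lemma mod_mul6 (f : bform) x X Y w :
  \sum_(q <- Delta x) f (act q.1 X * act q.2 1 * Y) w = f (act x X * Y) w.
Proof. by rewrite mod_mul2 mulr1. Qed.

Lemma PR3 (f : bform) h k :
  \sum_(t <- flatten [seq smul (smul (pi h) (pi (S p.1))) (pi p.2) | p <- Delta k]) f t.1 t.2 =
  \sum_(t <- flatten [seq smul (pi (h * S p.1)) (pi p.2) | p <- Delta k]) f t.1 t.2.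
Proof.
rewrite !sum_flat.
under eq_bigr => p _ do rewrite E3.
under [RHS]eq_bigr => p _ do rewrite E2.
under eq_bigr => p _ do under eq_bigr => a _ do under eq_bigr => w _ do under eq_bigr => y _ do
  rewrite [act w.1 _]ax_M6 act_sum2 bf_sum1.
under eq_bigr => p _ do rewrite exchange_big /=.
under eq_bigr => p _ do under eq_bigr => w _ do under eq_bigr => a _ do rewrite exchange_big /=.
under eq_bigr => p _ do under eq_bigr => w _ do rewrite exchange_big /=.
under eq_bigr => p _ do under eq_bigr => w _ do under eq_bigr => c _ do rewrite exchange_big /=.
rewrite (N5 (F := fun u v t => \sum_(a <- Delta h) f (act a.1 (act u 1 * act v 1)) (a.2 * t))) /=;
  [|trilin|by move=> w c y; apply: eq_bigr => a _; rewrite mulrA].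
under eq_bigr => p _ do under eq_bigr => q _ do under eq_bigr => r _ do under eq_bigr => a _ do
  rewrite ax_mod_mul bf_sum1.
under eq_bigr => p _ do under eq_bigr => q _ do under eq_bigr => r _ do under eq_bigr => a _ do
  under eq_bigr => u _ do rewrite [act u.2 _]ax_M5 big_distrr /= bf_sum1.
under eq_bigr => p _ do under eq_bigr => q _ do under eq_bigr => r _ do under eq_bigr => a _ do
  under eq_bigr => u _ do under eq_bigr => d _ do rewrite mulrA.
under eq_bigr => p _ do under eq_bigr => q _ do under eq_bigr => r _ do under eq_bigr => a _ do coas.
under eq_bigr => p _ do under eq_bigr => q _ do under eq_bigr => r _ do under eq_bigr => a _ do
  under eq_bigr => u _ do rewrite mod_mul6.
under eq_bigr => p _ do under eq_bigr => q _ do under eq_bigr => r _ do under eq_bigr => a _ do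
  under eq_bigr => u _ do wrwA (T4 u.1 r.1).
symmetry.
under eq_bigr => p _ do (rewrite Dmul /=; [|bilin]).
under eq_bigr => p _ do under eq_bigr => a _ do under eq_bigr => w _ do under eq_bigr => y _ do
  rewrite ax_M6 bf_sum1.
under eq_bigr => p _ do under eq_bigr => a _ do under eq_bigr => w _ do under eq_bigr => y _ do
  (rewrite Dmul /=; [|bilin]).
under eq_bigr => p _ do under eq_bigr => a _ do under eq_bigr => w _ do under eq_bigr => y _ do
  rewrite exchange_big /=.
under eq_bigr => p _ do under eq_bigr => a _ do under eq_bigr => w _ do rewrite exchange_big /=.
under eq_bigr => p _ do rewrite exchange_big /=.
under eq_bigr => p _ do under eq_bigr => w _ do rewrite exchange_big /=.
under eq_bigr => p _ do under eq_bigr => w _ do under eq_bigr => c _ do rewrite exchange_big /=.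
rewrite (N5 (F := fun x v t => \sum_(a <- Delta h) \sum_(u <- Delta a.1)
    f (act (u.1 * x) 1 * act (u.2 * v) 1) (a.2 * t))) /=;
  [|trilin|by move=> w c y; apply: eq_bigr => a _; apply: eq_bigr => u _; rewrite !mulrA].
done.
Qed.


Lemma N4 (F : H -> H -> H -> K) (G : H * H -> H * H -> K) h : trilinear_form F ->
  (forall x y, G x y = F x.1 (S y.2) (x.2 * S y.1)) ->
  \sum_(p <- Delta h) \sum_(x <- Delta p.1) \sum_(y <- Delta p.2) G x y =
  \sum_(p <- Delta h) \sum_(o <- Delta 1) F (o.1 * p.1) (S p.2) o.2.
Proof.
move=> hF hG; have [T1' T2' T3'] := triD hF.
under eq_bigr => p _ do under eq_bigr => x _ do under eq_bigr => y _ do rewrite hG.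
coas'.
under eq_bigr => p _ do coas.
under eq_bigr => p _ do under eq_bigr => q _ do dst (fun v => F p.1 (S q.2) v).
coas.
by under eq_bigr => p _ do f3g (fun u : H * H => F u.1 (S p.2) u.2).
Qed.

Lemma N4c (F : H -> H -> H -> K) h : trilinear_form F ->
  \sum_(p <- Delta h) \sum_(o <- Delta 1) \sum_(d <- Delta (o.1 * p.1)) F d.1 (d.2 * S p.2) o.2 =
  \sum_(p <- Delta h) \sum_(q <- Delta 1) \sum_(r <- Delta 1)
     F (r.1 * p.1) (epss q.1 * epst r.2 * epst p.2) q.2.
Proof.
move=> hF; have [T1' T2' T3'] := triD hF.
under eq_bigr => p _ do under eq_bigr => o _ do (rewrite Dmul /=; [|bilin]).
under eq_bigr => p _ do under eq_bigr => o _ do rewrite exchange_big /=.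
under eq_bigr => p _ do rewrite exchange_big /=.
coas'.
under eq_bigr => p _ do rewrite exchange_big /=.
under eq_bigr => p _ do under eq_bigr => o _ do rewrite exchange_big /=.
under eq_bigr => p _ do under eq_bigr => o _ do under eq_bigr => e _ do under eq_bigr => q _ do
  rewrite -mulrA.
under eq_bigr => p _ do under eq_bigr => o _ do under eq_bigr => e _ do
  dst (fun v => F (e.1 * p.1) (e.2 * v) o.2).
under eq_bigr => p _ do u1.
under eq_bigr => p _ do
  f3'r (fun u : H * H => \sum_(r <- Delta 1) F (r.1 * p.1) (u.1 * r.2 * epst p.2) u.2) (1 : H).
by under eq_bigr => p _ do under eq_bigr => q _ do
  f3r (fun u : H * H => F (u.1 * p.1) (epss q.1 * u.2 * epst p.2) q.2) (1 : H).
Qed.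


Lemma weq_symA x y : weqA x y -> weqA y x.
Proof. by move=> W g; rewrite W. Qed.

Lemma PR4 (f : bform) h k :
  \sum_(t <- flatten [seq smul (smul (pi p.1) (pi (S p.2))) (pi k) | p <- Delta h]) f t.1 t.2 =
  \sum_(t <- flatten [seq smul (pi p.1) (pi (S p.2 * k)) | p <- Delta h]) f t.1 t.2.
Proof.
rewrite !sum_flat.
under eq_bigr => p _ do rewrite E3.
under [RHS]eq_bigr => p _ do rewrite E2.
under eq_bigr => p _ do under eq_bigr => x _ do (rewrite DS /=; [|bilin]).
rewrite (N4 (F := fun u v t => \sum_(s <- Delta k) f (act u (act v (act s.1 1))) (t * s.2))) /=;
  [|trilin|by []].
under [RHS]eq_bigr => p _ do under eq_bigr => x _ do (rewrite Dmul /=; [|bilin]).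
under [RHS]eq_bigr => p _ do under eq_bigr => x _ do (rewrite DS /=; [|bilin]).
under [RHS]eq_bigr => p _ do under eq_bigr => x _ do under eq_bigr => y _ do under eq_bigr => s _ do
  rewrite !mulrA.
rewrite [RHS](N4 (F := fun u v t => \sum_(s <- Delta k) f (act u (act (v * s.1) 1)) (t * s.2))) /=;
  [|trilin|by []].
under eq_bigr => p _ do under eq_bigr => o _ do under eq_bigr => s _ do
  rewrite [act (o.1 * p.1) _]ax_M5 bf_sum1.
under eq_bigr => p _ do under eq_bigr => o _ do rewrite exchange_big /=.
rewrite (N4c (F := fun u v t => \sum_(s <- Delta k) f (act u 1 * act v (act s.1 1)) (t * s.2))) /=;
  [|trilin].
under [RHS]eq_bigr => p _ do under eq_bigr => o _ do under eq_bigr => s _ do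
  rewrite [act (o.1 * p.1) _]ax_M5 bf_sum1.
under [RHS]eq_bigr => p _ do under eq_bigr => o _ do rewrite exchange_big /=.
under [RHS]eq_bigr => p _ do under eq_bigr => o _ do under eq_bigr => d _ do under eq_bigr => s _ do
  rewrite mulrA.
rewrite [RHS](N4c (F := fun u v t => \sum_(s <- Delta k) f (act u 1 * act (v * s.1) 1) (t * s.2))) /=;
  [|trilin].
apply: eq_bigr => p _; apply: eq_bigr => q _; apply: eq_bigr => r _; apply: eq_bigr => s _.
rewrite -[epss q.1 * epst r.2 * epst p.2]mulrA.
wrwA (weq_symA (T2 q.1 (epst r.2 * epst p.2) (act s.1 1))).
wrwA (weq_symA (T1 r.2 (epst p.2) (act s.1 1))).
wrwA (T1 p.2 s.1 1).
wrwA (T1 r.2 (epst p.2 * s.1) 1).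
wrwA (T2 q.1 (epst r.2 * (epst p.2 * s.1)) 1).
by rewrite !mulrA.
Qed.


Lemma DSs_D (F : H * H -> K) x : bil F ->
  \sum_(b <- Delta x) \sum_(e <- Delta (S b.1 * b.2)) F e = \sum_(e <- Delta (epss x)) F e.
Proof. by move=> hF; rewrite -ax_Ss Dsum'. Qed.

Lemma W1s (g : H -> K) (G : H * H -> K) h : kform g -> (forall p, G p = g (p.1 * epss p.2)) ->
  \sum_(p <- Delta h) G p = g h.
Proof.
move=> hg hG; have DL : forall a x y, g (a *: x + y) = a * g x + g y := hg.
rewrite (eq_bigr _ (fun p _ => hG p)).
under eq_bigr => p _ do rewrite epssE big_distrr /= (kform_sum _ _ hg).
under eq_bigr => p _ do under eq_bigr => o _ do rewrite -scalerAr (kformZ _ _ hg).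
rewrite (D1r' (F := fun u : H * H => eps u.2 * g u.1)) /=; [|bilin|by []].
by rewrite Dcounit2.
Qed.

Lemma PR4s (f : bform) h k :
  \sum_(p <- Delta h) \sum_(t <- smul (smul (pi p.1) (pi (S p.2))) (pi k)) f t.1 t.2 =
  \sum_(p <- Delta h) \sum_(t <- smul (pi p.1) (pi (S p.2 * k))) f t.1 t.2.
Proof. by have := PR4 f h k; rewrite !sum_flat. Qed.

Lemma PR6 (f : bform) h :
  \sum_(t <- pi h) f t.1 t.2 =
  \sum_(t <- flatten [seq smul (smul (pi p.1.1) (pi (S p.1.2))) (pi p.2) | p <- Delta2l Delta h]) f t.1 t.2.
Proof.
rewrite SM2 [RHS]sum_flat /Delta2l big_allpairs_dep /=.
under [RHS]eq_bigr => t _ do rewrite PR4s.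
under [RHS]eq_bigr => t _ do under eq_bigr => q _ do rewrite E2.
symmetry; coas'.
under eq_bigr => t _ do rewrite exchange_big /=.
under eq_bigr => t _ do under eq_bigr => x _ do (rewrite DSs_D /=; [|bilin]).
under eq_bigr => t _ do under eq_bigr => x _ do (rewrite Depss2 /=; [|bilin]).
under eq_bigr => t _ do under eq_bigr => x _ do
  f3'r (fun u : H * H => f (act x.1 (act u.1 1)) (x.2 * (u.2 * epss t.2))) (1 : H).
under eq_bigr => t _ do under eq_bigr => x _ do under eq_bigr => p _ do wrwA (T4 x.1 p.1).
under eq_bigr => t _ do under eq_bigr => x _ do
  f3'g (fun u : H * H => f (act (x.1 * u.1) 1) (x.2 * (u.2 * epss t.2))).
under eq_bigr => t _ do under eq_bigr => x _ do under eq_bigr => q _ do rewrite mul1r mulrA.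
under eq_bigr => t _ do d1r (fun u : H * H => f (act u.1 1) (u.2 * epss t.2)).
coas'.
by under eq_bigr => t _ do (rewrite (W1s (g := fun v => f (act t.1 1) v)) /=; [|kf|by []]).
Qed.


Lemma main_thm : is_partial_rep_smash eps Delta S act (pi0 Delta act).
Proof.
split; [|split; [|split; [|split; [|split]]]].
- by move=> f hf hb.
- by move=> h k f hf hb; exact: (PR2 (BForm hf) h k).
- by move=> h k f hf hb; exact: (PR3 (BForm hf) h k).
- by move=> h k f hf hb; exact: (PR4 (BForm hf) h k).
- by move=> h k f hf hb; exact: (PR5 (BForm hf) h k).
- by move=> h f hf hb; exact: (PR6 (BForm hf) h).
Qed.
End Work.

Theorem proposition3p6 (K : fieldType) (H : algType K)
    (eps : H -> K) (Delta : H -> seq (H * H)) (S : H -> H)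
    (A : algType K) (act : H -> A -> A) :
  is_weak_hopf eps Delta S ->
  is_sym_partial_module_algebra Delta act ->
  is_partial_rep_smash eps Delta S act (pi0 Delta act).
Proof. move=> HW HA; exact: (main_thm HW HA). Qed.
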